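(* Let $M^2$ be a minimal surface of general type in $\mathbb R^4$, parameterized by semi-canonical parameters $(u,v)$, and satisfying $\gamma_1=0$ identically. Then the function $G\sqrt{|\mu^2-\nu^2|}$ does not depend on $u$.
   Context: $\mathbb R^4$ carries the standard metric $g=\langle\cdot,\cdot\rangle$ and flat connection $\nabla'$; everything is smooth and local. For a regular surface $M^2: z=z(u,v)$ let $E,F,G$ be the first fundamental form coefficients, $\sigma$ the second fundamental form, $K$ the Gauss curvature, and $\varkappa$ the curvature of the normal connection, $\varkappa=g(R^\perp(x,y)n_2,n_1)$ for a positively oriented orthonormal frame $(x,y,n_1,n_2)$ with $x,y$ tangent. Minimal means $\sigma(x,x)+\sigma(y,y)=0$ for orthonormal tangent $x,y$. A minimal surface is of general type if $K^2-\varkappa^2>0$ and $\varkappa\neq0$ everywhere. The ellipse of curvature at $p$ is $\{\sigma(v,v): v\in T_pM^2,\ |v|=1\}$; a tangent line is canonical if it is collinear with an axis of this ellipse. The geometric frame is a positively oriented orthonormal frame $\{x,y,n_1,n_2\}$ with $x,y$ canonical tangent fields and $n_1,n_2$ normal, satisfying $\nabla'_xx=\gamma_1y+\nu n_1$, $\nabla'_xy=-\gamma_1x+\mu n_2$, $\nabla'_yx=-\gamma_2y+\mu n_2$, $\nabla'_yy=\gamma_2x-\nu n_1$, $\nabla'_xn_1=-\nu x+\beta_1n_2$, $\nabla'_yn_1=\nu y+\beta_2n_2$, $\nabla'_xn_2=-\mu y-\beta_1n_1$, $\nabla'_yn_2=-\mu x-\beta_2n_1$, with $\mu>0$, $\nu\ne0$,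 $\mu^2\ne\nu^2$; the functions $\nu,\mu,\gamma_1,\gamma_2,\beta_1,\beta_2$ are the invariants of $M^2$. Parameters $(u,v)$ are semi-canonical if the parametric lines are integral curves of the canonical tangents, with $F=0$, $x=z_u/\sqrt E$, $y=z_v/\sqrt G$; then $\gamma_1=-y(\ln\sqrt E)$, $\gamma_2=-x(\ln\sqrt G)$. *)

(* Defs.v *)
From Stdlib Require Import Reals Lra.
Open Scope R_scope.

Record vec4 := mkV { c0 : R; c1 : R; c2 : R; c3 : R }.

Definition vadd (a b : vec4) : vec4 :=
  mkV (c0 a + c0 b) (c1 a + c1 b) (c2 a + c2 b) (c3 a + c3 b).
Definition vscale (k : R) (a : vec4) : vec4 :=
  mkV (k * c0 a) (k * c1 a) (k * c2 a) (k * c3 a).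
Definition vopp (a : vec4) : vec4 := vscale (-1) a.
Definition dot (a b : vec4) : R :=
  c0 a * c0 b + c1 a * c1 b + c2 a * c2 b + c3 a * c3 b.

Definition det3 (a11 a12 a13 a21 a22 a23 a31 a32 a33 : R) : R :=
  a11 * (a22 * a33 - a23 * a32) - a12 * (a21 * a33 - a23 * a31)
  + a13 * (a21 * a32 - a22 * a31).

Definition det4 (a b c d : vec4) : R :=
    c0 a * det3 (c1 b) (c1 c) (c1 d) (c2 b) (c2 c) (c2 d) (c3 b) (c3 c) (c3 d)
  - c0 b * det3 (c1 a) (c1 c) (c1 d) (c2 a) (c2 c) (c2 d) (c3 a) (c3 c) (c3 d)
  + c0 c * det3 (c1 a) (c1 b) (c1 d) (c2 a) (c2 b) (c2 d) (c3 a) (c3 b) (c3 d)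
  - c0 d * det3 (c1 a) (c1 b) (c1 c) (c2 a) (c2 b) (c2 c) (c3 a) (c3 b) (c3 c).

Definition scal2 := R -> R -> R.
Definition vfield := R -> R -> vec4.
Definition domain := R -> R -> Prop.

Definition open_dom (U : domain) : Prop :=
  forall u v, U u v -> exists r, 0 < r /\
    forall a b, Rabs (a - u) < r -> Rabs (b - v) < r -> U a b.

Definition cont2_on (U : domain) (f : scal2) : Prop :=
  forall u v, U u v -> forall eps, 0 < eps -> exists d, 0 < d /\
    forall a b, U a b -> Rabs (a - u) < d -> Rabs (b - v) < d ->
      Rabs (f a b - f u v) < eps.

Definition is_du (U : domain) (f fu : scal2) : Prop :=
  forall u v, U u v -> derivable_pt_lim (fun t => f t v) u (fu u v).
Definition is_dv (U : domain) (f fv : scal2) : Prop :=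
  forall u v, U u v -> derivable_pt_lim (fun t => f u t) v (fv u v).

Fixpoint Ck (k : nat) (U : domain) (f : scal2) : Prop :=
  match k with
  | O => cont2_on U f
  | S k' => cont2_on U f /\ exists fu fv,
      is_du U f fu /\ is_dv U f fv /\ Ck k' U fu /\ Ck k' U fv
  end.
Definition smooth (U : domain) (f : scal2) : Prop := forall k, Ck k U f.

Definition comp0 (X : vfield) : scal2 := fun u v => c0 (X u v).
Definition comp1 (X : vfield) : scal2 := fun u v => c1 (X u v).
Definition comp2 (X : vfield) : scal2 := fun u v => c2 (X u v).
Definition comp3 (X : vfield) : scal2 := fun u v => c3 (X u v).

Definition vsmooth (U : domain) (X : vfield) : Prop :=
  smooth U (comp0 X) /\ smooth U (comp1 X) /\
  smooth U (comp2 X) /\ smooth U (comp3 X).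

Definition vis_du (U : domain) (X D : vfield) : Prop :=
  is_du U (comp0 X) (comp0 D) /\ is_du U (comp1 X) (comp1 D) /\
  is_du U (comp2 X) (comp2 D) /\ is_du U (comp3 X) (comp3 D).
Definition vis_dv (U : domain) (X D : vfield) : Prop :=
  is_dv U (comp0 X) (comp0 D) /\ is_dv U (comp1 X) (comp1 D) /\
  is_dv U (comp2 X) (comp2 D) /\ is_dv U (comp3 X) (comp3 D).

(** Since x = z_u/sqrt E and y = z_v/sqrt G, the flat derivative along x
  (resp. y) of a field X is nabla'_x X = (1/sqrt E) X_u
  (resp. nabla'_y X = (1/sqrt G) X_v); the derivative formulas of the
  geometric frame are written accordingly, multiplied through by sqrt E
  (resp. sqrt G). *)

Definition fE (zu : vfield) : scal2 := fun u v => dot (zu u v) (zu u v).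
Definition fF (zu zv : vfield) : scal2 := fun u v => dot (zu u v) (zv u v).
Definition fG (zv : vfield) : scal2 := fun u v => dot (zv u v) (zv u v).

Definition lin2 (a : R) (X : vec4) (b : R) (Y : vec4) : vec4 :=
  vadd (vscale a X) (vscale b Y).

Definition semicanonical_geometric_frame (U : domain) (z zu zv : vfield)
  (x y n1 n2 : vfield) (nu mu gamma1 gamma2 beta1 beta2 : scal2) : Prop :=
  vsmooth U z /\ vis_du U z zu /\ vis_dv U z zv /\
  vsmooth U x /\ vsmooth U y /\ vsmooth U n1 /\ vsmooth U n2 /\
  smooth U nu /\ smooth U mu /\ smooth U gamma1 /\ smooth U gamma2 /\
  smooth U beta1 /\ smooth U beta2 /\
  (forall u v, U u v ->
     fE zu u v * fG zv u v - fF zu zv u v ^ 2 > 0 /\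
     fF zu zv u v = 0 /\
     x u v = vscale (/ sqrt (fE zu u v)) (zu u v) /\
     y u v = vscale (/ sqrt (fG zv u v)) (zv u v) /\
     dot (x u v) (x u v) = 1 /\ dot (y u v) (y u v) = 1 /\
     dot (n1 u v) (n1 u v) = 1 /\ dot (n2 u v) (n2 u v) = 1 /\
     dot (x u v) (y u v) = 0 /\ dot (x u v) (n1 u v) = 0 /\
     dot (x u v) (n2 u v) = 0 /\ dot (y u v) (n1 u v) = 0 /\
     dot (y u v) (n2 u v) = 0 /\ dot (n1 u v) (n2 u v) = 0 /\
     det4 (x u v) (y u v) (n1 u v) (n2 u v) > 0 /\
     mu u v > 0 /\ nu u v <> 0 /\ mu u v ^ 2 <> nu u v ^ 2) /\
  vis_du U x (fun u v => vscale (sqrt (fE zu u v))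
                (lin2 (gamma1 u v) (y u v) (nu u v) (n1 u v))) /\
  vis_du U y (fun u v => vscale (sqrt (fE zu u v))
                (lin2 (- gamma1 u v) (x u v) (mu u v) (n2 u v))) /\
  vis_dv U x (fun u v => vscale (sqrt (fG zv u v))
                (lin2 (- gamma2 u v) (y u v) (mu u v) (n2 u v))) /\
  vis_dv U y (fun u v => vscale (sqrt (fG zv u v))
                (lin2 (gamma2 u v) (x u v) (- nu u v) (n1 u v))) /\
  vis_du U n1 (fun u v => vscale (sqrt (fE zu u v))
                (lin2 (- nu u v) (x u v) (beta1 u v) (n2 u v))) /\
  vis_dv U n1 (fun u v => vscale (sqrt (fG zv u v))
                (lin2 (nu u v) (y u v) (beta2 u v) (n2 u v))) /\
  vis_du U n2 (fun u v => vscale (sqrt (fE zu u v))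
                (lin2 (- mu u v) (y u v) (- beta1 u v) (n1 u v))) /\
  vis_dv U n2 (fun u v => vscale (sqrt (fG zv u v))
                (lin2 (- mu u v) (x u v) (- beta2 u v) (n1 u v))).

(* Main.v *)
Require Import Defs.
From Stdlib Require Import Reals.
From Stdlib Require Import Lra.
Require Import Defs.
Open Scope R_scope.

Lemma dpl_plus (f g : R -> R) x a b :
  derivable_pt_lim f x a -> derivable_pt_lim g x b ->
  derivable_pt_lim (fun t => f t + g t) x (a + b).
Proof. intros; apply (derivable_pt_lim_plus f g); auto. Qed.

Lemma dpl_mult (f g : R -> R) x a b :
  derivable_pt_lim f x a -> derivable_pt_lim g x b ->
  derivable_pt_lim (fun t => f t * g t) x (a * g x + f x * b).
Proof. intros. replace (a * g x + f x * b) with (a * g x + f x * b) by ring.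
  apply (derivable_pt_lim_mult f g); auto. Qed.

Lemma dpl_loc f g x l r : 0 < r ->
  (forall y, Rabs (y - x) < r -> f y = g y) ->
  derivable_pt_lim f x l -> derivable_pt_lim g x l.
Proof.
  intros Hr Hfg Hd eps Heps. destruct (Hd eps Heps) as [d Hdd].
  assert (Hp : 0 < Rmin d r) by (apply Rmin_pos; [apply cond_pos|auto]).
  exists (mkposreal _ Hp). intros h hne hlt. simpl in hlt.
  rewrite <- !Hfg. apply Hdd; auto. apply Rlt_le_trans with (1 := hlt); apply Rmin_l.
  replace (x - x) with 0 by ring; rewrite Rabs_R0; auto.
  replace (x + h - x) with h by ring; apply Rlt_le_trans with (1 := hlt); apply Rmin_r.
Qed.

Lemma dpl_const_loc f x r : 0 < r ->
  (forall y, Rabs (y - x) < r -> f y = 0) -> derivable_pt_lim f x 0.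
Proof.
  intros Hr H. apply dpl_loc with (f := fct_cte 0) (r := r); auto.
  intros; rewrite H; auto. apply derivable_pt_lim_const.
Qed.

Lemma small_zero d : (forall eps, 0 < eps -> Rabs d < eps) -> d = 0.
Proof.
  intros H. destruct (Req_dec d 0) as [|Hn]; auto.
  assert (Hp : 0 < Rabs d) by (apply Rabs_pos_lt; auto).
  specialize (H _ Hp). lra.
Qed.

Lemma schwarz (U : domain) f fu fv fuv fvu :
  open_dom U -> is_du U f fu -> is_dv U f fv -> is_dv U fu fuv ->
  is_du U fv fvu -> cont2_on U fuv -> cont2_on U fvu ->
  forall u v, U u v -> fuv u v = fvu u v.
Proof.
  intros HO Hfu Hfv Hfuv Hfvu C1 C2 u v Huv.
  apply Rminus_diag_uniq. apply small_zero. intros eps Heps.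
  destruct (HO u v Huv) as [r [Hr HU]].
  assert (He2 : 0 < eps / 2) by lra.
  destruct (C1 u v Huv _ He2) as [d1 [Hd1 D1]].
  destruct (C2 u v Huv _ He2) as [d2 [Hd2 D2]].
  set (h := Rmin r (Rmin d1 d2) / 2).
  assert (Hm : 0 < Rmin r (Rmin d1 d2)) by (repeat apply Rmin_pos; auto).
  assert (Hh : 0 < h) by (unfold h; lra).
  assert (Hhr : h < r) by (unfold h; pose proof (Rmin_l r (Rmin d1 d2)); lra).
  assert (Hh1 : h < d1) by (unfold h; pose proof (Rmin_r r (Rmin d1 d2));
     pose proof (Rmin_l d1 d2); lra).
  assert (Hh2 : h < d2) by (unfold h; pose proof (Rmin_r r (Rmin d1 d2));
     pose proof (Rmin_r d1 d2); lra).
  assert (Box : forall a b, u <= a <= u + h -> v <= b <= v + h ->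
     U a b /\ Rabs (a - u) < d1 /\ Rabs (b - v) < d1 /\
     Rabs (a - u) < d2 /\ Rabs (b - v) < d2).
  { intros a b Ha Hb. assert (Rabs (a - u) <= h) by (apply Rabs_le; lra).
    assert (Rabs (b - v) <= h) by (apply Rabs_le; lra).
    repeat split; try lra. apply HU; lra. }
  destruct (MVT_cor2 (fun s => f s (v + h) - f s v)
     (fun s => fu s (v + h) - fu s v) u (u + h)) as [s1 [Es1 Hs1]]; [lra| |].
  { intros c Hc. apply derivable_pt_lim_minus.
    - apply Hfu. apply Box; lra.
    - apply Hfu. apply Box; lra. }
  destruct (MVT_cor2 (fun t => fu s1 t) (fun t => fuv s1 t) v (v + h))
     as [t1 [Et1 Ht1]]; [lra| |].
  { intros c Hc. apply Hfuv. apply Box; lra. }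
  destruct (MVT_cor2 (fun t => f (u + h) t - f u t)
     (fun t => fv (u + h) t - fv u t) v (v + h)) as [t2 [Et2 Ht2]]; [lra| |].
  { intros c Hc. apply derivable_pt_lim_minus.
    - apply Hfv. apply Box; lra.
    - apply Hfv. apply Box; lra. }
  destruct (MVT_cor2 (fun s => fv s t2) (fun s => fvu s t2) u (u + h))
     as [s2 [Es2 Hs2]]; [lra| |].
  { intros c Hc. apply Hfvu. apply Box; lra. }
  cbv beta in *.
  assert (Eq : fuv s1 t1 = fvu s2 t2).
  { replace (u + h - u) with h in * by ring. replace (v + h - v) with h in * by ring.
    assert (fuv s1 t1 * h * h = fvu s2 t2 * h * h) by nra.
    apply Rmult_eq_reg_r with h; [|lra]. apply Rmult_eq_reg_r with h; [|lra]. auto. }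
  destruct (Box s1 t1) as [B1 [B2 [B3 _]]]; try lra.
  destruct (Box s2 t2) as [B1' [_ [_ [B4 B5]]]]; try lra.
  specialize (D1 _ _ B1 B2 B3). specialize (D2 _ _ B1' B4 B5).
  rewrite Eq in D1.
  replace (fuv u v - fvu u v) with (-(fvu s2 t2 - fuv u v) + (fvu s2 t2 - fvu u v)) by ring.
  eapply Rle_lt_trans. apply Rabs_triang. rewrite Rabs_Ropp. lra.
Qed.

Lemma du_eq U f g1 g2 : is_du U f g1 -> is_du U f g2 -> forall u v, U u v -> g1 u v = g2 u v.
Proof. intros H1 H2 u v Huv. eapply uniqueness_limite; [apply H1|apply H2]; auto. Qed.
Lemma dv_eq U f g1 g2 : is_dv U f g1 -> is_dv U f g2 -> forall u v, U u v -> g1 u v = g2 u v.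
Proof. intros H1 H2 u v Huv. eapply uniqueness_limite; [apply H1|apply H2]; auto. Qed.

Lemma dv_transfer U f g w : open_dom U -> (forall u v, U u v -> f u v = g u v) ->
  is_dv U f w -> is_dv U g w.
Proof.
  intros HO Heq Hd u v Huv. destruct (HO u v Huv) as [r [Hr HU]].
  apply dpl_loc with (f := fun t => f u t) (r := r); auto.
  intros y Hy. apply Heq. apply HU; auto. replace (u - u) with 0 by ring; rewrite Rabs_R0; auto.
Qed.
Lemma du_transfer U f g w : open_dom U -> (forall u v, U u v -> f u v = g u v) ->
  is_du U f w -> is_du U g w.
Proof.
  intros HO Heq Hd u v Huv. destruct (HO u v Huv) as [r [Hr HU]].
  apply dpl_loc with (f := fun t => f t v) (r := r); auto.
  intros y Hy. apply Heq. apply HU; auto. replace (v - v) with 0 by ring; rewrite Rabs_R0; auto.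
Qed.

Lemma mixed U f fu fv : open_dom U -> smooth U f -> is_du U f fu -> is_dv U f fv ->
  exists w, is_dv U fu w /\ is_du U fv w.
Proof.
  intros HO Hs Hu Hv. pose proof (Hs 2%nat) as [_ [fu' [fv' [Hu' [Hv' [C1 C2]]]]]].
  destruct C1 as [_ [a [b [_ [Hb [_ Cb]]]]]].
  destruct C2 as [_ [c [d [Hc [_ [Cc _]]]]]].
  simpl in Cb, Cc.
  pose proof (schwarz U f fu' fv' b c HO Hu' Hv' Hb Hc Cb Cc) as Sch.
  exists b. split.
  - apply dv_transfer with fu'; auto. intros; eapply du_eq; eauto.
  - apply du_transfer with fv'; [auto| intros; eapply dv_eq; eauto |].
    intros u v Huv. rewrite Sch; auto.
Qed.

Lemma vmixed U X Du Dv : open_dom U -> vsmooth U X -> vis_du U X Du -> vis_dv U X Dv ->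
  exists W, vis_dv U Du W /\ vis_du U Dv W.
Proof.
  intros HO [S0 [S1 [S2 S3]]] [U0 [U1 [U2 U3]]] [V0 [V1 [V2 V3]]].
  destruct (mixed U _ _ _ HO S0 U0 V0) as [w0 [A0 B0]].
  destruct (mixed U _ _ _ HO S1 U1 V1) as [w1 [A1 B1]].
  destruct (mixed U _ _ _ HO S2 U2 V2) as [w2 [A2 B2]].
  destruct (mixed U _ _ _ HO S3 U3 V3) as [w3 [A3 B3]].
  exists (fun u v => mkV (w0 u v) (w1 u v) (w2 u v) (w3 u v)).
  unfold vis_dv, vis_du, comp0, comp1, comp2, comp3; simpl. tauto.
Qed.

Definition vderiv (A : R -> vec4) (a : vec4) t :=
  derivable_pt_lim (fun s => c0 (A s)) t (c0 a) /\
  derivable_pt_lim (fun s => c1 (A s)) t (c1 a) /\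
  derivable_pt_lim (fun s => c2 (A s)) t (c2 a) /\
  derivable_pt_lim (fun s => c3 (A s)) t (c3 a).

Lemma dot_deriv A B a b t : vderiv A a t -> vderiv B b t ->
  derivable_pt_lim (fun s => dot (A s) (B s)) t (dot a (B t) + dot (A t) b).
Proof.
  intros [A0 [A1 [A2 A3]]] [B0 [B1 [B2 B3]]]. unfold dot.
  replace (c0 a * c0 (B t) + c1 a * c1 (B t) + c2 a * c2 (B t) + c3 a * c3 (B t) +
   (c0 (A t) * c0 b + c1 (A t) * c1 b + c2 (A t) * c2 b + c3 (A t) * c3 b)) with
   ((c0 a * c0 (B t) + c0 (A t) * c0 b) + (c1 a * c1 (B t) + c1 (A t) * c1 b) +
    (c2 a * c2 (B t) + c2 (A t) * c2 b) + (c3 a * c3 (B t) + c3 (A t) * c3 b)) by ring.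
  repeat apply dpl_plus; apply dpl_mult; auto.
Qed.

Lemma vdu U X D u v : vis_du U X D -> U u v -> vderiv (fun s => X s v) (D u v) u.
Proof. intros [H0 [H1 [H2 H3]]] Huv; repeat split; [apply H0|apply H1|apply H2|apply H3]; auto. Qed.
Lemma vdv U X D u v : vis_dv U X D -> U u v -> vderiv (fun s => X u s) (D u v) v.
Proof. intros [H0 [H1 [H2 H3]]] Huv; repeat split; [apply H0|apply H1|apply H2|apply H3]; auto. Qed.

Lemma dot_zero_dv U A B Av Bv u v : open_dom U -> vis_dv U A Av -> vis_dv U B Bv ->
  (forall u v, U u v -> dot (A u v) (B u v) = 0) -> U u v ->
  dot (Av u v) (B u v) + dot (A u v) (Bv u v) = 0.
Proof.
  intros HO HA HB H0 Huv. destruct (HO u v Huv) as [r [Hr HU]].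
  eapply uniqueness_limite.
  - apply (dot_deriv (fun s => A u s) (fun s => B u s)); eapply vdv; eauto.
  - apply dpl_const_loc with r; auto. intros y Hy. apply H0, HU; auto.
    replace (u - u) with 0 by ring; rewrite Rabs_R0; auto.
Qed.

Lemma dot_sym a b : dot a b = dot b a.
Proof. unfold dot; ring. Qed.
Lemma dot_scale_l k a b : dot (vscale k a) b = k * dot a b.
Proof. unfold dot, vscale; simpl; ring. Qed.
Lemma dot_scale_r k a b : dot a (vscale k b) = k * dot a b.
Proof. unfold dot, vscale; simpl; ring. Qed.
Lemma dot_lin2_l a X b Y Z : dot (lin2 a X b Y) Z = a * dot X Z + b * dot Y Z.
Proof. unfold dot, lin2, vadd, vscale; simpl; ring. Qed.
Lemma dot_lin2_r a X b Y Z : dot Z (lin2 a X b Y) = a * dot Z X + b * dot Z Y.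
Proof. unfold dot, lin2, vadd, vscale; simpl; ring. Qed.

Theorem lemma7p1 (U : domain) (z zu zv x y n1 n2 : vfield)
  (nu mu gamma1 gamma2 beta1 beta2 : scal2) :
  open_dom U ->
  semicanonical_geometric_frame U z zu zv x y n1 n2
    nu mu gamma1 gamma2 beta1 beta2 ->
  (forall u v, U u v -> gamma1 u v = 0) ->
  forall u1 u2 v,
    (forall t, Rmin u1 u2 <= t <= Rmax u1 u2 -> U t v) ->
    fG zv u1 v * sqrt (Rabs (mu u1 v ^ 2 - nu u1 v ^ 2))
    = fG zv u2 v * sqrt (Rabs (mu u2 v ^ 2 - nu u2 v ^ 2)).
Proof.
  intros HO Hsm Hg1 u1 u2 v Hint.
  destruct Hsm as [Sz [Hzu [Hzv [Sx [Sy [Sn1 [Sn2 [_ [_ [_ [_ [_ [_ [Hpt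
    [Dxu [Dyu [Dxv [Dyv [Dn1u [Dn1v [Dn2u Dn2v]]]]]]]]]]]]]]]]]]]]].
  destruct (vmixed U z _ _ HO Sz Hzu Hzv) as [Wz [Wz1 Wz2]].
  destruct (vmixed U x _ _ HO Sx Dxu Dxv) as [Wx [Wx1 Wx2]].
  destruct (vmixed U y _ _ HO Sy Dyu Dyv) as [Wy [Wy1 Wy2]].
  assert (Hzu_e : forall a b, U a b -> zu a b = vscale (sqrt (fE zu a b)) (x a b)).
  { intros a b Huv. destruct (Hpt a b Huv) as [HEG [HF [Hx [Hy [Hxx _]]]]].
    rewrite Hx in Hxx |- *. rewrite dot_scale_l, dot_scale_r in Hxx.
    assert (sqrt (fE zu a b) <> 0).
    { intro H0. rewrite H0, Rinv_0 in Hxx. lra. }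
    destruct (zu a b); unfold vscale; simpl; f_equal; field; auto. }
  assert (Hzv_g : forall a b, U a b -> zv a b = vscale (sqrt (fG zv a b)) (y a b)).
  { intros a b Huv. destruct (Hpt a b Huv) as [HEG [HF [Hx [Hy [Hxx [Hyy _]]]]]].
    rewrite Hy in Hyy |- *. rewrite dot_scale_l, dot_scale_r in Hyy.
    assert (sqrt (fG zv a b) <> 0).
    { intro H0. rewrite H0, Rinv_0 in Hyy. lra. }
    destruct (zv a b); unfold vscale; simpl; f_equal; field; auto. }
  assert (Za : forall a b, U a b -> dot (y a b) (zu a b) = 0).
  { intros a b Huv. rewrite Hzu_e by auto. rewrite dot_scale_r, dot_sym.
    destruct (Hpt a b Huv) as [_ [_ [_ [_ [_ [_ [_ [_ [Hxy _]]]]]]]]]. rewrite Hxy; ring. }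
  assert (Zb : forall a b, U a b -> dot (vscale (sqrt (fE zu a b))
                (lin2 (gamma1 a b) (y a b) (nu a b) (n1 a b))) (n2 a b) = 0).
  { intros a b Huv. rewrite dot_scale_l, dot_lin2_l.
    destruct (Hpt a b Huv) as [_ [_ [_ [_ [_ [_ [_ [_ [_ [_ [_ [_ [Hyn2 [Hn12 _]]]]]]]]]]]]]].
    rewrite Hyn2, Hn12; ring. }
  assert (Zc : forall a b, U a b -> dot (vscale (sqrt (fE zu a b))
                (lin2 (- gamma1 a b) (x a b) (mu a b) (n2 a b))) (n1 a b) = 0).
  { intros a b Huv. rewrite dot_scale_l, dot_lin2_l.
    destruct (Hpt a b Huv) as [_ [_ [_ [_ [_ [_ [_ [_ [_ [Hxn1 _]]]]]]]]]].
    destruct (Hpt a b Huv) as [_ [_ [_ [_ [_ [_ [_ [_ [_ [_ [_ [_ [_ [Hn12 _]]]]]]]]]]]]]].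
    rewrite Hxn1, dot_sym, Hn12; ring. }
  set (P := fun u v => dot (vscale (sqrt (fG zv u v))
                (lin2 (- gamma2 u v) (y u v) (mu u v) (n2 u v))) (n2 u v)).
  set (Q := fun u v => - dot (vscale (sqrt (fG zv u v))
                (lin2 (gamma2 u v) (x u v) (- nu u v) (n1 u v))) (n1 u v)).
  set (H := fun t => fG zv t v * (P t v * P t v - Q t v * Q t v)).
  assert (dH : forall t, U t v -> derivable_pt_lim H t 0).
  { intros t Ht.
    pose proof (dot_deriv _ _ _ _ _ (vdu _ _ _ t v Wz2 Ht) (vdu _ _ _ t v Wz2 Ht)) as dG.
    pose proof (dot_deriv _ _ _ _ _ (vdu _ _ _ t v Wx2 Ht) (vdu _ _ _ t v Dn2u Ht)) as dP.
    pose proof (derivable_pt_lim_opp _ _ _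
       (dot_deriv _ _ _ _ _ (vdu _ _ _ t v Wy2 Ht) (vdu _ _ _ t v Dn1u Ht))) as dQ.
    pose proof (dpl_mult _ _ _ _ _ dG (derivable_pt_lim_minus _ _ _ _ _
       (dpl_mult _ _ _ _ _ dP dP) (dpl_mult _ _ _ _ _ dQ dQ))) as D.
    unfold opp_fct, minus_fct, mult_fct in D. cbv beta in D.
    match type of D with derivable_pt_lim _ _ ?L => replace L with 0 in D end.
    { exact D. }
    pose proof (dot_zero_dv U _ _ _ _ t v HO Dyv Wz1 Za Ht) as Ea.
    pose proof (dot_zero_dv U _ _ _ _ t v HO Wx1 Dn2v Zb Ht) as Eb.
    pose proof (dot_zero_dv U _ _ _ _ t v HO Wy1 Dn1v Zc Ht) as Ec.
    cbv beta in Ea, Eb, Ec.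
    destruct (Hpt t v Ht) as [_ [_ [_ [_ [Hxx [Hyy [Hn11 [Hn22 [Hxy [Hxn1 [Hxn2
      [Hyn1 [Hyn2 [Hn12 _]]]]]]]]]]]]]].
    assert (Hyx : dot (y t v) (x t v) = 0) by (rewrite dot_sym; auto).
    assert (Hn1x : dot (n1 t v) (x t v) = 0) by (rewrite dot_sym; auto).
    assert (Hn2x : dot (n2 t v) (x t v) = 0) by (rewrite dot_sym; auto).
    assert (Hn1y : dot (n1 t v) (y t v) = 0) by (rewrite dot_sym; auto).
    assert (Hn2y : dot (n2 t v) (y t v) = 0) by (rewrite dot_sym; auto).
    assert (Hn21 : dot (n2 t v) (n1 t v) = 0) by (rewrite dot_sym; auto).
    pose proof (Hzv_g t v Ht) as Hz. pose proof (Hzu_e t v Ht) as Hz'.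
    pose proof (Hg1 t v Ht) as G1.
    set (g := sqrt (fG zv t v)) in *. set (e := sqrt (fE zu t v)) in *.
    rewrite Hz' in Ea. rewrite Hz.
    repeat (first [rewrite dot_scale_l in Ea | rewrite dot_scale_r in Ea | rewrite dot_lin2_l in Ea | rewrite dot_lin2_r in Ea]).
    repeat (first [rewrite dot_scale_l in Eb | rewrite dot_scale_r in Eb | rewrite dot_lin2_l in Eb | rewrite dot_lin2_r in Eb]).
    repeat (first [rewrite dot_scale_l in Ec | rewrite dot_scale_r in Ec | rewrite dot_lin2_l in Ec | rewrite dot_lin2_r in Ec]).
    repeat (first [rewrite dot_scale_l | rewrite dot_scale_r | rewrite dot_lin2_l | rewrite dot_lin2_r]).
    rewrite ?(dot_sym (Wz t v) (y t v)) in *.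
    rewrite ?(dot_sym (n2 t v) (Wx t v)) in *.
    rewrite ?(dot_sym (n1 t v) (Wy t v)) in *.
    rewrite ?Hxx, ?Hyy, ?Hn11, ?Hn22, ?Hxy, ?Hxn1, ?Hxn2, ?Hyn1, ?Hyn2, ?Hn12,
      ?Hyx, ?Hn1x, ?Hn2x, ?Hn1y, ?Hn2y, ?Hn21, ?G1 in Ea.
    rewrite ?Hxx, ?Hyy, ?Hn11, ?Hn22, ?Hxy, ?Hxn1, ?Hxn2, ?Hyn1, ?Hyn2, ?Hn12,
      ?Hyx, ?Hn1x, ?Hn2x, ?Hn1y, ?Hn2y, ?Hn21, ?G1 in Eb.
    rewrite ?Hxx, ?Hyy, ?Hn11, ?Hn22, ?Hxy, ?Hxn1, ?Hxn2, ?Hyn1, ?Hyn2, ?Hn12,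
      ?Hyx, ?Hn1x, ?Hn2x, ?Hn1y, ?Hn2y, ?Hn21, ?G1 in Ec.
    rewrite ?Hxx, ?Hyy, ?Hn11, ?Hn22, ?Hxy, ?Hxn1, ?Hxn2, ?Hyn1, ?Hyn2, ?Hn12,
      ?Hyx, ?Hn1x, ?Hn2x, ?Hn1y, ?Hn2y, ?Hn21, ?G1.
    assert (A1 : dot (y t v) (Wz t v) = - (g * e * gamma2 t v)) by (ring_simplify in Ea; ring_simplify in Eb; ring_simplify in Ec; lra).
    assert (A2 : dot (Wx t v) (n2 t v) = e * g * nu t v * beta2 t v) by (ring_simplify in Ea; ring_simplify in Eb; ring_simplify in Ec; lra).
    assert (A3 : dot (Wy t v) (n1 t v) = - (e * g * mu t v * beta2 t v)) by (ring_simplify in Ea; ring_simplify in Eb; ring_simplify in Ec; lra).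
    rewrite A1, A2, A3. ring. }
  assert (HGpos : forall t, 0 <= fG zv t v).
  { intros t. unfold fG, dot. nra. }
  assert (Hval : forall t, U t v ->
     fG zv t v * sqrt (Rabs (mu t v ^ 2 - nu t v ^ 2)) = sqrt (Rabs (H t))).
  { intros t Ht. 
    destruct (Hpt t v Ht) as [_ [_ [_ [_ [Hxx [Hyy [Hn11 [Hn22 [Hxy [Hxn1 [Hxn2
      [Hyn1 [Hyn2 [Hn12 _]]]]]]]]]]]]]].
    assert (HH : H t = fG zv t v * fG zv t v * (mu t v ^ 2 - nu t v ^ 2)).
    { unfold H, P, Q. rewrite !dot_scale_l, !dot_lin2_l.
      rewrite Hyn2, Hn22, Hxn1, Hn11.
      pose proof (sqrt_sqrt _ (HGpos t)) as Hs.
      set (sg := sqrt (fG zv t v)) in *. rewrite <- Hs. ring. }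
    rewrite HH, Rabs_mult, (Rabs_right (fG zv t v * fG zv t v)) by
      (apply Rle_ge; apply Rmult_le_pos; auto).
    rewrite sqrt_mult_alt by (apply Rmult_le_pos; auto).
    rewrite sqrt_square by auto. reflexivity. }
  assert (HU1 : U u1 v) by (apply Hint; split; [apply Rmin_l | apply Rmax_l]).
  assert (HU2 : U u2 v) by (apply Hint; split; [apply Rmin_r | apply Rmax_r]).
  rewrite (Hval u1 HU1), (Hval u2 HU2).
  assert (Hc : H u1 = H u2).
  { destruct (Rtotal_order u1 u2) as [Hlt | [Heq | Hgt]].
    - destruct (MVT_cor2 H (fun _ => 0) u1 u2 Hlt) as [c [Hc _]].
      { intros c Hc. apply dH. apply Hint.
        rewrite Rmin_left, Rmax_right by lra. auto. }
      lra.
    - subst; auto.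
    - destruct (MVT_cor2 H (fun _ => 0) u2 u1 Hgt) as [c [Hc _]].
      { intros c Hc. apply dH. apply Hint.
        rewrite Rmin_right, Rmax_left by lra. auto. }
      lra. }
  rewrite Hc. reflexivity.
Qed.
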